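(* Let $\varphi_1,\dots,\varphi_m: L\to L'$ and $\psi_1,\dots,\psi_m: N\to N'$ be simplicial maps between simplicial complexes. Assume $\beta: N\to L$ and $\alpha: L'\to N'$ are strong equivalences and that $\alpha\circ\varphi_i\circ\beta\sim\psi_i$ for all $i=1,\dots,m$. Then $\mathrm{SD}(\varphi_1,\dots,\varphi_m)=\mathrm{SD}(\psi_1,\dots,\psi_m)$.
   Context: Simplicial maps $f,g: K\to K'$ are contiguous if $f(\sigma)\cup g(\sigma)$ is a simplex for every simplex $\sigma$ of $K$; $f\sim g$ (same contiguity class) if they are joined by a finite chain of simplicial maps with consecutive ones contiguous. A simplicial map $f: K\to K'$ is a strong equivalence if there is a simplicial map $g: K'\to K$ with $f\circ g\sim 1_{K'}$ and $g\circ f\sim 1_K$. For simplicial maps $\varphi_1,\dots,\varphi_m: K\to K'$, $\mathrm{SD}(\varphi_1,\dots,\varphi_m)$ is the least $n\ge0$ such that $K$ is a union of subcomplexes $K_0,\dots,K_n$ with $\varphi_i|_{K_k}\sim\varphi_j|_{K_k}$ for all $i,j,k$. *)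

(* Defs.v *)
From Stdlib Require Import Relations ClassicalEpsilon.
From mathcomp Require Import all_boot.
Set Implicit Arguments. Unset Strict Implicit. Unset Printing Implicit Defensive.

Definition is_complex (V : finType) (K : {set {set V}}) : bool :=
  (set0 \notin K) &&
  [forall s in K, forall t : {set V}, ((t \subset s) && (t != set0)) ==> (t \in K)].

Definition is_subcomplex (V : finType) (A K : {set {set V}}) : bool :=
  is_complex A && (A \subset K).

Definition simplicial (V W : finType) (K : {set {set V}}) (K' : {set {set W}})
  (f : V -> W) : Prop := forall s, s \in K -> f @: s \in K'.

Definition contiguous (V W : finType) (K : {set {set V}}) (K' : {set {set W}})
  (f g : V -> W) : Prop := forall s, s \in K -> (f @: s) :|: (g @: s) \in K'.

Definition contig_step (V W : finType) (K : {set {set V}}) (K' : {set {set W}})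
  (f g : V -> W) : Prop :=
  [/\ simplicial K K' f, simplicial K K' g & contiguous K K' f g].

Definition contig_class (V W : finType) (K : {set {set V}}) (K' : {set {set W}})
  (f g : V -> W) : Prop :=
  [/\ simplicial K K' f, simplicial K K' g &
      clos_refl_trans (V -> W) (contig_step K K') f g].

Definition strong_equiv (V W : finType) (K : {set {set V}}) (K' : {set {set W}})
  (f : V -> W) : Prop :=
  simplicial K K' f /\
  exists g : W -> V, [/\ simplicial K' K g,
     contig_class K' K' (f \o g) id & contig_class K K (g \o f) id].

Definition SD_le (V W : finType) (K : {set {set V}}) (K' : {set {set W}})
  (m : nat) (phi : 'I_m -> V -> W) (n : nat) : Prop :=
  exists Ks : 'I_n.+1 -> {set {set V}},
    [/\ forall k, is_subcomplex (Ks k) K,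
        \bigcup_(k < n.+1) Ks k = K &
        forall i j k, contig_class (Ks k) K' (phi i) (phi j)].

Definition SD_leb (V W : finType) (K : {set {set V}}) (K' : {set {set W}})
  (m : nat) (phi : 'I_m -> V -> W) (n : nat) : bool :=
  if excluded_middle_informative (SD_le K K' phi n) then true else false.

(* SD(phi_1,...,phi_m) as an element of nat ∪ {∞}: Some n = least such n,
   None = no such covering exists (SD = ∞). *)
Definition SD (V W : finType) (K : {set {set V}}) (K' : {set {set W}})
  (m : nat) (phi : 'I_m -> V -> W) : option nat :=
  match excluded_middle_informative (exists n, SD_leb K K' phi n) with
  | left ex => Some (ex_minn ex)
  | right _ => None
  end.

(* Main.v *)
Require Import Defs.
From Stdlib Require Import Relations ClassicalEpsilon.
From mathcomp Require Import all_boot.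
Set Implicit Arguments. Unset Strict Implicit. Unset Printing Implicit Defensive.

Lemma complex_sub (V : finType) (K : {set {set V}}) (s t : {set V}) :
  is_complex K -> s \in K -> t \subset s -> t != set0 -> t \in K.
Proof.
case/andP=> _ /forall_inP H Hs Hts Ht.
by move/forallP: (H s Hs) => /(_ t) /implyP; apply; rewrite Hts Ht.
Qed.

Lemma complex_set0 (V : finType) (K : {set {set V}}) :
  is_complex K -> set0 \notin K.
Proof. by case/andP. Qed.

Lemma cc_refl (V W : finType) (K : {set {set V}}) (K' : {set {set W}}) f :
  simplicial K K' f -> contig_class K K' f f.
Proof. by move=> h; split => //; apply: rt_refl. Qed.

Lemma cc_sym (V W : finType) (K : {set {set V}}) (K' : {set {set W}}) f g :
  contig_class K K' f g -> contig_class K K' g f.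
Proof.
case=> hf hg H; split => //.
elim: H {hf hg} => [a b [ha hb hab]|a|a b c _ IH1 _ IH2].
- apply: rt_step; split => // s Hs; rewrite setUC; exact: hab.
- exact: rt_refl.
- exact: rt_trans IH2 IH1.
Qed.

Lemma cc_trans (V W : finType) (K : {set {set V}}) (K' : {set {set W}}) f g h :
  contig_class K K' f g -> contig_class K K' g h -> contig_class K K' f h.
Proof. by case=> hf _ H1 [_ hh H2]; split => //; apply: rt_trans H1 H2. Qed.

Lemma simpl_comp (U V W : finType) (K0 : {set {set U}}) (K : {set {set V}})
  (K' : {set {set W}}) (h : U -> V) (f : V -> W) :
  simplicial K0 K h -> simplicial K K' f -> simplicial K0 K' (f \o h).
Proof. by move=> hh hf s Hs; rewrite imset_comp; apply/hf/hh. Qed.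

Lemma simpl3 (U V W X : finType) (K0 : {set {set U}}) (K : {set {set V}})
  (K' : {set {set W}}) (K'' : {set {set X}}) (h : U -> V) (g : W -> X) f :
  simplicial K0 K h -> simplicial K K' f -> simplicial K' K'' g ->
  simplicial K0 K'' (g \o f \o h).
Proof. by move=> hh hf hg; apply: simpl_comp hh (simpl_comp hf hg). Qed.

Lemma cc_comp (U V W X : finType) (K0 : {set {set U}}) (K : {set {set V}})
  (K' : {set {set W}}) (K'' : {set {set X}}) (h : U -> V) (g : W -> X) f f' :
  contig_class K K' f f' -> simplicial K0 K h -> simplicial K' K'' g ->
  contig_class K0 K'' (g \o f \o h) (g \o f' \o h).
Proof.
move=> [hf hf' H] hh hg; split; [exact: simpl3 hh hf hg|exact: simpl3 hh hf' hg|].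
elim: H {hf hf'} => [a b [ha hb hab]|a|a b c _ IH1 _ IH2].
- apply: rt_step; split; [exact: simpl3 hh ha hg|exact: simpl3 hh hb hg|].
  move=> s Hs; rewrite (imset_comp (g \o a) h) (imset_comp (g \o b) h).
  rewrite (imset_comp g a) (imset_comp g b) -imsetU; apply: hg; exact/hab/hh.
- exact: rt_refl.
- exact: rt_trans IH1 IH2.
Qed.

Lemma simpl_id (V : finType) (K0 K : {set {set V}}) :
  K0 \subset K -> simplicial K0 K id.
Proof. by move=> sub s Hs; rewrite imset_id; apply: (subsetP sub). Qed.

Lemma transfer (V1 W1 V2 W2 : finType) (K1 : {set {set V1}}) (K1' : {set {set W1}})
  (K2 : {set {set V2}}) (K2' : {set {set W2}}) (m : nat)
  (phi1 : 'I_m -> V1 -> W1) (phi2 : 'I_m -> V2 -> W2) (f : V2 -> V1) (g : W1 -> W2) n :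
  is_complex K2 -> simplicial K2 K1 f -> simplicial K1' K2' g ->
  (forall i, contig_class K2 K2' (g \o phi1 i \o f) (phi2 i)) ->
  SD_le K1 K1' phi1 n -> SD_le K2 K2' phi2 n.
Proof.
move=> cK2 hf hg H [Ks [hsub hcov hcc]].
exists (fun k => [set s in K2 | f @: s \in Ks k]); split.
- move=> k; have /andP[cKk _] := hsub k.
  apply/andP; split; last by apply/subsetP => s; rewrite inE => /andP[].
  apply/andP; split.
    rewrite inE negb_and imset0; apply/orP; right; exact: complex_set0.
  apply/forall_inP => s; rewrite inE => /andP[Hs Hfs].
  apply/forallP => t; apply/implyP => /andP[Hts Ht0].
  rewrite inE (complex_sub cK2 Hs Hts Ht0) /=.
  apply: (complex_sub cKk Hfs); first exact: imsetS.
  by rewrite imset_eq0.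
- apply/setP => s; apply/bigcupP/idP.
    by case=> k _; rewrite inE => /andP[].
  move=> Hs; have := hf s Hs; rewrite -hcov => /bigcupP[k _ Hk].
  by exists k => //; rewrite inE Hs.
- move=> i j k.
  have sub : [set s in K2 | f @: s \in Ks k] \subset K2.
    by apply/subsetP => s; rewrite inE => /andP[].
  have hfk : simplicial [set s in K2 | f @: s \in Ks k] (Ks k) f.
    by move=> s; rewrite inE => /andP[].
  have R : forall a b, contig_class K2 K2' a b ->
      contig_class [set s in K2 | f @: s \in Ks k] K2' a b.
    move=> a b Hab; exact: (cc_comp (g := id) Hab (simpl_id sub) (simpl_id (subxx _))).
  apply: cc_trans; first exact/cc_sym/R/H.
  apply: cc_trans; last exact/R/H.
  exact: (cc_comp (hcc i j k) hfk hg).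
Qed.

Lemma SD_ext (V W V2 W2 : finType) (K : {set {set V}}) (K' : {set {set W}})
  (K2 : {set {set V2}}) (K2' : {set {set W2}}) m (phi : 'I_m -> V -> W)
  (psi : 'I_m -> V2 -> W2) :
  (forall n, SD_le K K' phi n <-> SD_le K2 K2' psi n) ->
  SD K K' phi = SD K2 K2' psi.
Proof.
move=> E.
have Eb : forall n, SD_leb K K' phi n = SD_leb K2 K2' psi n.
  move=> n; rewrite /SD_leb.
  case: excluded_middle_informative => a; case: excluded_middle_informative => b //.
  - by case: b; apply/E.
  - by case: a; apply/E.
rewrite /SD.
case: excluded_middle_informative => a; case: excluded_middle_informative => b.
- congr Some.
  case: ex_minnP => x Hx Hminx; case: ex_minnP => y Hy Hminy.
  apply/eqP; rewrite eqn_leq Hminx ?Eb // Hminy // -Eb //.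
- by case: b; case: a => n; rewrite Eb; exists n.
- by case: a; case: b => n; rewrite -Eb; exists n.
- by [].
Qed.

Theorem corollary3p8
  (VL VL' VN VN' : finType)
  (L : {set {set VL}}) (L' : {set {set VL'}})
  (N : {set {set VN}}) (N' : {set {set VN'}})
  (cL : is_complex L) (cL' : is_complex L')
  (cN : is_complex N) (cN' : is_complex N')
  (m : nat) (phi : 'I_m -> VL -> VL') (psi : 'I_m -> VN -> VN')
  (hphi : forall i, simplicial L L' (phi i))
  (hpsi : forall i, simplicial N N' (psi i))
  (beta : VN -> VL) (alpha : VL' -> VN')
  (hbeta : strong_equiv N L beta) (halpha : strong_equiv L' N' alpha)
  (hcomp : forall i, contig_class N N' (alpha \o phi i \o beta) (psi i)) :
  SD L L' phi = SD N N' psi.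
Proof.
case: hbeta => hb [gam [hgam hbg _]].
case: halpha => ha [del [hdel _ hda]].
apply: SD_ext => n; split.
  exact: (transfer cN hb ha hcomp).
apply: (transfer cL hgam hdel) => i.
have idL' := simpl_id (subxx L').
have idL := simpl_id (subxx L).
have h1 := cc_comp hda (hphi i) idL'.
have h2 := cc_comp hbg idL (simpl_comp (simpl_comp (hphi i) ha) hdel).
have h3 := cc_comp (hcomp i) hgam hdel.
apply: cc_sym.
apply: cc_trans; first exact: (cc_sym h1).
apply: cc_trans; first exact: (cc_sym h2).
exact: h3.
Qed.
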